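(* Let $t\in\mathbb{N}$ and $r=3t^2+t+2$. Every graph $G\in\mathcal{X}_t$ that has no clique cutset of size at most $2$ is either complete or contains no clique of size $r$ (i.e. is $K_r$-free).
   Context: All graphs are finite and simple. For graphs $G_1=(V_1,E_1)$, $G_2=(V_2,E_2)$, $G_1\cap G_2=(V_1\cap V_2, E_1\cap E_2)$. For a graph $G=(V,E)$ and an injective map $\alpha$ on $V$, $G^{\alpha}$ has vertex set $\alpha(V)$ and edge set $\{\{\alpha(v),\alpha(w)\}: \{v,w\}\in E\}$. We write $G\xrightarrow{\cap} H$ if $H$ is (isomorphic to) $G^{\alpha_1}\cap\cdots\cap G^{\alpha_k}$ for some $k\ge1$ and injective maps $\alpha_1,\dots,\alpha_k$ on $V(G)$. For a set $M$ of graphs, $\mathrm{SiFree}(M)$ is the class of graphs $G$ such that $G\xrightarrow{\cap}F$ holds for no $F\in M$. For integers $a,b,c\ge1$, $S_{a,b,c}$ is the tree consisting of a vertex of degree $3$ together with three pendant paths having $a$, $b$, $c$ edges respectively; $tS_{t,t,t}$ is the disjoint union of $t$ copies of $S_{t,t,t}$, and $\mathcal{X}_t=\mathrm{SiFree}(\{tS_{t,t,t}\})$. A clique cutset is a (possibly empty) clique $U\subseteq V(G)$ such that $G-U$ is disconnected (so the hypothesis includes that $G$ is connected). *)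

(* Defs.v *)
(* Finite simple graphs are given by a finType of vertices
   and a symmetric irreflexive boolean relation (adjacency). *)
From mathcomp Require Import all_boot.
Set Implicit Arguments. Unset Strict Implicit. Unset Printing Implicit Defensive.

(* v lies in the vertex set of G^{al_0} cap ... cap G^{al_k}
   (k+1 maps, all into the common universe nat). *)
Definition inter_vert (T : finType) (k : nat) (al : 'I_k.+1 -> T -> nat)
  (v : nat) : Prop :=
  forall i : 'I_k.+1, exists x : T, al i x = v.

Definition inter_edge (T : finType) (e : rel T) (k : nat)
  (al : 'I_k.+1 -> T -> nat) (v w : nat) : Prop :=
  forall i : 'I_k.+1, exists x y : T, [/\ al i x = v, al i y = w & e x y].

(* G ->cap H : H is isomorphic to an intersection of k >= 1 injective
   images of G. *)
Definition si_to (T : finType) (e : rel T) (T' : finType) (e' : rel T') : Prop :=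
  exists (k : nat) (al : 'I_k.+1 -> T -> nat),
    (forall i, injective (al i)) /\
    exists g : T' -> nat,
      [/\ injective g,
          (forall v, inter_vert al v <-> exists a, g a = v) &
          (forall a b, e' a b <-> inter_edge e al (g a) (g b))].

(* Vertex (c, None): the centre of copy c; vertex (c, Some (j, p)): the vertex
   at distance p+1 from the centre on leg j of copy c (p < t, j < 3).  So each
   copy is S_{t,t,t}: a degree-3 centre with three pendant paths of t edges. *)
Definition tS_vert (t : nat) : finType := ('I_t * option ('I_3 * 'I_t))%type.

Definition S_adj (t : nat) (u v : option ('I_3 * 'I_t)) : bool :=
  match u, v with
  | None, None => false
  | None, Some (_, p) => val p == 0
  | Some (_, p), None => val p == 0
  | Some (j, p), Some (j', p') =>
      (j == j') && ((val p).+1 == val p') || (j == j') && ((val p').+1 == val p)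
  end.

Definition tS_adj (t : nat) : rel (tS_vert t) :=
  fun u v => (u.1 == v.1) && S_adj u.2 v.2.

Definition in_X (t : nat) (T : finType) (e : rel T) : Prop :=
  ~ si_to e (@tS_adj t).

Definition is_clique (T : finType) (e : rel T) (S : {set T}) : Prop :=
  forall x y, x \in S -> y \in S -> x != y -> e x y.

Definition del_rel (T : finType) (e : rel T) (U : {set T}) : rel T :=
  fun x y => [&& e x y, x \notin U & y \notin U].

(* U is a clique cutset: U is a (possibly empty) clique and G - U is
   disconnected, i.e. has two vertices joined by no path in G - U. *)
Definition clique_cutset (T : finType) (e : rel T) (U : {set T}) : Prop :=
  is_clique e U /\
  exists x y, [/\ x \notin U, y \notin U & ~~ connect (del_rel e U) x y].

Definition complete (T : finType) (e : rel T) : Prop :=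
  forall x y : T, x != y -> e x y.

Definition Kr_free (T : finType) (e : rel T) (r : nat) : Prop :=
  ~ exists S : {set T}, #|S| = r /\ is_clique e S.

(* Main.v *)
Require Import Defs.
From mathcomp Require Import all_boot zify.
Set Implicit Arguments. Unset Strict Implicit. Unset Printing Implicit Defensive.

Section Witness.
Variables (H T : finType) (adj : rel H) (e : rel T) (k : nat)
  (phi : 'I_k.+2 -> H -> T).
Hypothesis e_irr : irreflexive e.
Hypothesis phi_inj : forall i, injective (phi i).
Hypothesis phi_hom : forall i a b, adj a b -> e (phi i a) (phi i b).
Hypothesis phi_sep : forall a b, a != b -> ~~ adj a b ->
  exists i, ~~ e (phi i a) (phi i b).

Let g (a : H) : nat := enum_rank a.
Let NH := #|H|.
Let NT := #|T|.
Definition wal (i : 'I_k.+2) (x : T) : nat :=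
  if [pick a | phi i a == x] is Some a then g a
  else NH + i * NT + enum_rank x.

Lemma g_lt a : g a < NH.
Proof. exact: ltn_ord. Qed.

Lemma g_inj : injective g.
Proof. by move=> a b /ord_inj /enum_rank_inj. Qed.

Lemma wal_phi i a : wal i (phi i a) = g a.
Proof.
rewrite /wal; case: pickP => [a' /eqP /phi_inj -> //|/(_ a)]; by rewrite eqxx.
Qed.

Lemma wal_g i x a : wal i x = g a -> x = phi i a.
Proof.
rewrite /wal; case: pickP => [a' /eqP <- /g_inj -> //|_ H1].
have := g_lt a; rewrite -H1; lia.
Qed.

Lemma wal_inj i : injective (wal i).
Proof.
move=> x y; rewrite {1}/wal; case: pickP => [a /eqP <- | Hn].
  by move=> /esym/wal_g ->.
rewrite /wal; case: pickP => [b /eqP <- H1|_].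
  have := g_lt b; rewrite -H1; lia.
have := ltn_ord (enum_rank x); have := ltn_ord (enum_rank y).
move=> _ _ H1. have : enum_rank x = enum_rank y :> nat by lia.
by move/ord_inj/enum_rank_inj.
Qed.

Lemma wal_big i x : (forall a, phi i a != x) -> NH + i * NT <= wal i x < NH + i.+1 * NT.
Proof.
move=> Hx; rewrite /wal; case: pickP => [a /eqP Ha|_]; first by move: (Hx a); rewrite Ha eqxx.
have := ltn_ord (enum_rank x); rewrite -/NT => h; nia.
Qed.

Lemma witness : si_to e adj.
Proof.
exists k.+1, wal; split; first exact: wal_inj.
exists g; split; first exact: g_inj.
- move=> v; split.
  + move=> Hv.
    have [x0 Hx0] := Hv ord0. have [x1 Hx1] := Hv (@Ordinal k.+2 1 isT).
    case: (pickP (fun a => phi ord0 a == x0)) => [a /eqP Ha|H0].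
      by exists a; rewrite -Hx0 -Ha wal_phi.
    case: (pickP (fun a => phi (@Ordinal k.+2 1 isT) a == x1)) => [a /eqP Ha|H1].
      by exists a; rewrite -Hx1 -Ha wal_phi.
    have := @wal_big ord0 x0 (fun a => negbT (H0 a)).
    have := @wal_big (@Ordinal k.+2 1 isT) x1 (fun a => negbT (H1 a)).
    rewrite Hx0 Hx1 /=; lia.
  + by move=> [a <-] i; exists (phi i a); rewrite wal_phi.
- move=> a b; split.
  + by move=> Hab i; exists (phi i a), (phi i b); rewrite !wal_phi; split=> //; apply: phi_hom.
  + move=> Hi; apply/negPn/negP => Hn.
    have [Eab|Nab] := eqVneq a b.
      subst b; have [x [y [Hx Hy Hxy]]] := Hi ord0.
      have Exy : x = y by apply: (@wal_inj ord0); rewrite Hx Hy.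
      by subst y; rewrite e_irr in Hxy.
    have [i Hi'] := phi_sep Nab Hn.
    have [x [y [Hx Hy Hxy]]] := Hi i.
    by move: Hi'; rewrite -(wal_g Hx) -(wal_g Hy) Hxy.
Qed.
End Witness.

Lemma extend (H T : finType) (adj : rel H) (e : rel T) (K : {set T})
  (f0 : H -> option T) (a0 : T) :
  symmetric adj -> irreflexive adj -> symmetric e -> is_clique e K ->
  #|H| <= #|K| ->
  (forall u v a, f0 u = Some a -> f0 v = Some a -> u = v) ->
  (forall u v a, adj u v -> f0 u = Some a -> a \notin K ->
     exists2 b, f0 v = Some b & e a b) ->
  exists phi : H -> T, [/\ injective phi,
     (forall u v, adj u v -> e (phi u) (phi v)) &
     (forall u a, f0 u = Some a -> phi u = a)].
Proof.
move=> adj_sym adj_irr e_sym Kcl HK f0inj f0nb.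
pose Def := [set u | f0 u != None].
pose Und := ~: Def.
pose img := [set a | Some a \in f0 @: Def].
pose pool := K :\: img.
have Himg : #|img| <= #|Def|.
  have : #|[set Some a | a in img]| <= #|f0 @: Def|.
    apply: subset_leq_card; apply/subsetP => o /imsetP [a]; rewrite inE => ha ->.
    exact: ha.
  rewrite card_imset; last by move=> ? ? [].
  move/leq_trans; apply; exact: leq_imset_card.
have Hund : #|Und| <= #|pool|.
  have := cardsC Def; rewrite -/Und => hc.
  rewrite /pool cardsD.
  have : #|K :&: img| <= #|img| by apply: subset_leq_card; apply: subsetIr.
  lia.
pose gg u := nth a0 (enum pool) (index u (enum Und)).
have gg_pool u : u \in Und -> gg u \in pool.
  move=> hu; rewrite -mem_enum; apply: mem_nth.
  rewrite -cardE; apply: leq_trans Hund; rewrite cardE index_mem mem_enum //.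
have gg_inj u v : u \in Und -> v \in Und -> gg u = gg v -> u = v.
  move=> hu hv /eqP; rewrite /gg nth_uniq ?enum_uniq //; last first.
  - rewrite -cardE; apply: leq_trans Hund; rewrite cardE index_mem mem_enum //.
  - rewrite -cardE; apply: leq_trans Hund; rewrite cardE index_mem mem_enum //.
  move/eqP => hi.
  have hu' : u \in enum Und by rewrite mem_enum.
  have hv' : v \in enum Und by rewrite mem_enum.
  by rewrite -(nth_index u hu') hi (nth_index u hv').
pose phi u := if f0 u is Some a then a else gg u.
have UndP u : (u \in Und) = (f0 u == None) by rewrite !inE negbK.
have imgP u a : f0 u = Some a -> a \in img.
  by move=> h; rewrite inE -h; apply: imset_f; rewrite inE h.
exists phi; split.
- move=> u v; rewrite /phi.
  case Eu: (f0 u) => [a|]; case Ev: (f0 v) => [b|].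
  + by move=> eab; subst b; apply: f0inj Eu Ev.
  + move=> eab; have := gg_pool v; rewrite UndP Ev => /(_ isT).
    by rewrite inE -eab (imgP _ _ Eu).
  + move=> eab; have := gg_pool u; rewrite UndP Eu => /(_ isT).
    by rewrite inE eab (imgP _ _ Ev).
  + by apply: gg_inj; rewrite UndP ?Eu ?Ev.
- move=> u v huv; rewrite /phi.
  have neq : u != v by apply: contraTneq huv => ->; rewrite adj_irr.
  case Eu: (f0 u) => [a|]; case Ev: (f0 v) => [b|].
  + case: (boolP (a \in K)) => aK; last first.
      by have [b' ] := f0nb _ _ _ huv Eu aK; rewrite Ev => -[<-].
    case: (boolP (b \in K)) => bK; last first.
      have [a' ] := f0nb _ _ _ (etrans (adj_sym v u) huv) Ev bK.
      by rewrite Eu => -[<-]; rewrite e_sym.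
    apply: Kcl => //; apply: contra neq => /eqP eab; subst b.
    by apply/eqP; apply: f0inj Eu Ev.
  + have gv := gg_pool v; rewrite UndP Ev in gv; have := gv isT.
    rewrite inE => /andP [gni gK].
    case: (boolP (a \in K)) => aK; last first.
      by have [b' ] := f0nb _ _ _ huv Eu aK; rewrite Ev.
    apply: Kcl => //; apply: contra gni => /eqP <-; exact: (imgP _ _ Eu).
  + have gu := gg_pool u; rewrite UndP Eu in gu; have := gu isT.
    rewrite inE => /andP [gni gK].
    case: (boolP (b \in K)) => bK; last first.
      by have [a' ] := f0nb _ _ _ (etrans (adj_sym v u) huv) Ev bK; rewrite Eu.
    apply: Kcl => //; apply: contra gni => /eqP ->; exact: (imgP _ _ Ev).
  + have gu := gg_pool u; rewrite UndP Eu in gu; have := gu isT.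
    have gv := gg_pool v; rewrite UndP Ev in gv; have := gv isT.
    rewrite !inE => /andP [_ gvK] /andP [_ guK].
    apply: Kcl => //; apply: contra neq => /eqP h; apply/eqP.
    by apply: gg_inj h; rewrite UndP ?Eu ?Ev.
- by move=> u a h; rewrite /phi h.
Qed.

Section TS.
Variable t : nat.
Notation H := (tS_vert t).
Notation adj := (@tS_adj t).

Lemma tS_sym : symmetric adj.
Proof.
move=> [c [[j p]|]] [c' [[j' p']|]]; rewrite /tS_adj /= ?(eq_sym c) //.
by rewrite (eq_sym j) orbC.
Qed.

Lemma tS_irr : irreflexive adj.
Proof.
move=> [c [[j p]|]]; rewrite /tS_adj /= ?eqxx //=.
by rewrite (gtn_eqF (ltnSn p)).
Qed.

Variables (T : finType) (e : rel T) (K : {set T}).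
Hypotheses (e_sym : symmetric e) (e_irr : irreflexive e) (Kcl : is_clique e K)
  (HK : #|H| <= #|K|).

Definition good_emb (phi : H -> T) :=
  injective phi /\ (forall u v, adj u v -> e (phi u) (phi v)).

Section CaseC.
Variables (y x : T) (L : 'I_3 -> seq T).
Hypotheses (yK : y \notin K) (xK : x \in K) (nyx : ~~ e y x)
  (Lpath : forall j, path e y (L j)) (Lne : forall j, L j != [::])
  (Llast : forall j, last y (L j) \in K) (Luniq : forall j, uniq (L j))
  (yL : forall j, y \notin L j) (xL : forall j, x \notin L j)
  (Ldisj : forall j j' v, v \in L j -> v \in L j' -> j = j').

Lemma caseC (a b : H) : a.2 = None -> b.1 != a.1 ->
  exists phi, good_emb phi /\ ~~ e (phi a) (phi b).
Proof.
move=> a2 ba.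
pose f0 (v : H) : option T :=
  if v.1 == a.1 then
    (if v.2 is Some (j, p) then
       (if p < size (L j) then Some (nth y (L j) p) else None)
     else Some y)
  else if v == b then Some x else None.
have xy : x != y by apply: contraNneq yK => <-.
have Lsz j : 0 < size (L j) by case: (L j) (Lne j).
have [phi [phi_inj phi_hom phi_f0]] : exists phi : H -> T, [/\ injective phi,
     (forall u v, adj u v -> e (phi u) (phi v)) &
     (forall u a, f0 u = Some a -> phi u = a)].
  apply: (@extend _ _ _ _ _ f0 y).
  - exact: tS_sym.
  - exact: tS_irr.
  - exact: e_sym.
  - exact: Kcl.
  - exact: HK.
  - move=> [cu ou] [cv ov] v0; rewrite /f0 /=.
    case: ifP => [/eqP cuE|cuN]; case: ifP => [/eqP cvE|cvN].
    + case: ou => [[ju pu]|]; case: ov => [[jv pv]|].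
      * case: ifP => // hu; case: ifP => // hv [<-] [] E.
        have mu := mem_nth y hu; have mv := mem_nth y hv.
        rewrite E in mv; have jj := Ldisj mu mv; subst jv.
        move/eqP: E; rewrite nth_uniq // => /eqP E; rewrite cuE cvE.
        by have -> : pu = pv by apply: ord_inj.
      * case: ifP => // hu [<-] [] E; have := mem_nth y hu.
        by rewrite -E (negbTE (yL ju)).
      * case: ifP => // hv [<-] [] E; have := mem_nth y hv.
        by rewrite E (negbTE (yL jv)).
      * by rewrite cuE cvE.
    + case: ifP => // /eqP vb [<-].
      case: ou => [[ju pu]|].
      * case: ifP => // hu [] E; have := mem_nth y hu.
        by rewrite -E (negbTE (xL ju)).
      * by move=> [] E; move: xy; rewrite E eqxx.
    + case: ifP => // /eqP ub [<-].
      case: ov => [[jv pv]|].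
      * case: ifP => // hv [] E; have := mem_nth y hv.
        by rewrite E (negbTE (xL jv)).
      * by move=> [] E; move: xy; rewrite E eqxx.
    + by case: ifP => // /eqP vb2 _; rewrite cvE vb2.
    + by [].
  - move=> [cu ou] [cv ov] v0; rewrite /f0 /tS_adj /= => /andP [/eqP cuv hadj].
    subst cv; case: ifP => [/eqP cuE|cuN]; last first.
      by case: ifP => // _ [<-]; rewrite xK.
    case: ou hadj => [[ju pu]|]; case: ov => [[jv pv]|] //= hadj.
    + case: ifP => // hu [E] nK; subst v0.
      have hpu : pu.+1 < size (L ju).
        have : (pu : nat) != (size (L ju)).-1.
          by apply: contraNneq nK => ->; rewrite nth_last.
        move: hu (Lsz ju); lia.
      move: hadj => /orP [] /andP [/eqP jj /eqP pp]; subst jv.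
      * rewrite -pp hpu; eexists; first by [].
        by move/pathP: (Lpath ju) => /(_ y pu.+1 hpu).
      * have hv : pv < size (L ju) by lia.
        rewrite hv; eexists; first by [].
        rewrite e_sym; move/pathP: (Lpath ju) => /(_ y pu hu).
        by rewrite -pp.
    + move/eqP: hadj => p0; case: ifP => // hu [E] nK; subst v0.
      eexists; first by [].
      rewrite e_sym; move/pathP: (Lpath ju) => /(_ y 0 (Lsz ju)).
      by rewrite /= p0.
    + move/eqP: hadj => p0 [E] nK; subst v0.
      rewrite p0 (Lsz jv); eexists; first by [].
      move/pathP: (Lpath jv) => /(_ y 0 (Lsz jv)) /=.
      by [].
exists phi; split; first by [].
have -> : phi a = y by apply: phi_f0; rewrite /f0 eqxx a2.
have -> : phi b = x by apply: phi_f0; rewrite /f0 (negbTE ba) eqxx.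
exact: nyx.
Qed.
End CaseC.

Section CaseB.
Variables (z w x : T) (P : seq T).
Hypotheses (uq : uniq [:: z, w, x & P]) (ezw : e z w) (Ppath : path e z P)
  (Pne : P != [::]) (Plast : last z P \in K) (wK : w \in K) (xK : x \in K)
  (nzx : ~~ e z x).

Lemma caseB (c : 'I_t) (j : 'I_3) (p : 'I_t) (o : H) :
  o != (c, Some (j, p)) -> ~~ adj (c, Some (j, p)) o ->
  ~~ ((o.1 == c) && (if o.2 is Some (j', p') then (j' == j) && (p < p') else false)) ->
  exists phi, good_emb phi /\ ~~ e (phi (c, Some (j, p))) (phi o).
Proof.
move=> ou nadj nlw.
pose chain (v : H) : bool :=
  if v.2 is Some (j', p') then [&& v.1 == c, j' == j, p <= p' & p' - p <= size P]
  else false.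
pose idx (v : H) : nat := if v.2 is Some (_, p') then (p' : nat) else 0.
pose cw (v : H) : bool := (v.1 == c) &&
  (if v.2 is Some (j', p') then (j' == j) && ((p' : nat).+1 == p) else (p : nat) == 0).
pose f0 (v : H) : option T :=
  if chain v then Some (nth z (z :: P) (idx v - p))
  else if cw v then Some w else if v == o then Some x else None.
move: uq; rewrite /= !inE !negb_or => /andP [/and3P [zw zx zP]] /andP [/andP [wx wP]] /andP [xP Puq].
have zPu : uniq (z :: P) by rewrite /= zP.
have wzP : w \notin z :: P by rewrite inE negb_or eq_sym zw.
have xzP : x \notin z :: P by rewrite inE negb_or eq_sym zx.
have chain_inj u v : chain u -> chain v -> idx u - p = idx v - p -> u = v.
  case: u => [cu [[ju pu]|]] //; case: v => [cv [[jv pv]|]] //=.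
  rewrite /chain /idx /= => /and4P [/eqP -> /eqP -> hu _] /and4P [/eqP -> /eqP -> hv _] hh.
  have -> : pu = pv by apply: ord_inj; rewrite -(subnK hu) hh subnK.
  by [].
have cw_inj u v : cw u -> cw v -> u = v.
  case: u => [cu [[ju pu]|]]; case: v => [cv [[jv pv]|]];
    rewrite /cw /= => /andP [/eqP -> hu] /andP [/eqP -> hv] //.
  - move: hu hv => /andP [/eqP -> /eqP hu] /andP [/eqP -> /eqP hv].
    have -> : pu = pv by apply: ord_inj; apply: succn_inj; rewrite hu hv.
    by [].
  - by move: hu hv => /andP [_ /eqP hu] /eqP hv; rewrite hv in hu.
  - by move: hu hv => /eqP hu /andP [_ /eqP hv]; rewrite hu in hv.
have chain_mem v : chain v -> idx v - p < size (z :: P).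
  by case: v => [cv [[jv pv]|]] //; rewrite /chain /idx /= => /and4P [_ _ _ h]; rewrite ltnS.
have f0P v a : f0 v = Some a -> [\/ chain v /\ a = nth z (z :: P) (idx v - p),
    ~~ chain v /\ cw v /\ a = w | [/\ ~~ chain v, ~~ cw v, v = o & a = x]].
  rewrite /f0; case: (chain v) => [[<-]|]; first by apply: Or31.
  case: (cw v) => [[<-]|]; first by apply: Or32.
  by case: eqP => // -> [<-]; apply: Or33.
have [phi [phi_inj phi_hom phi_f0]] : exists phi : H -> T, [/\ injective phi,
     (forall u v, adj u v -> e (phi u) (phi v)) &
     (forall u a, f0 u = Some a -> phi u = a)].
  apply: (@extend _ _ _ _ _ f0 z).
  - exact: tS_sym.
  - exact: tS_irr.
  - exact: e_sym.
  - exact: Kcl.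
  - exact: HK.
  - move=> u v a0 /f0P hu /f0P; move: hu.
    case=> [[cu ->]|[ncu [cwu ->]]|[ncu ncwu -> ->]];
    case=> [[cv]|[ncv [cwv]]|[ncv ncwv -> ]] //.
    + move/eqP; rewrite nth_uniq ?chain_mem // => /eqP h.
      by apply: chain_inj; rewrite // h.
    + by move=> E; move: wzP; rewrite -E mem_nth ?chain_mem.
    + by move=> E; move: xzP; rewrite -E mem_nth ?chain_mem.
    + by move=> E; move: wzP; rewrite E mem_nth ?chain_mem.
    + by move=> _; apply: cw_inj.
    + by move=> E; move: wx; rewrite E eqxx.
    + by move=> E; move: xzP; rewrite E mem_nth ?chain_mem.
    + by move=> E; move: wx; rewrite E eqxx.
  - move=> u v a0 huv /f0P.
    case=> [[cu ->]|[ncu [cwu ->]]|[ncu ncwu _ ->]]; [|by rewrite wK|by rewrite xK].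
    move: u v huv cu => [cu0 [[ju pu]|]] [cv ov] //.
    rewrite /chain /idx /tS_adj /= => /andP [/eqP <- hS] /and4P [/eqP cE /eqP jE hpu hsz] naK.
    subst cu0 ju.
    have hlt : pu - p < size P.
      rewrite ltn_neqAle hsz andbT; apply: contraNneq naK => E.
      by rewrite E -[size P]/((size (z :: P)).-1) nth_last.
    have pathi i : i < size P -> e (nth z (z :: P) i) (nth z (z :: P) i.+1).
      by move=> hi; move/pathP: Ppath => /(_ z i hi).
    case: ov hS => [[jv pv]|] /= hS.
    + move: hS => /orP [] /andP [/eqP jE' /eqP pE]; subst jv.
      * have h1 : p <= pv by rewrite -pE; apply: leqW.
        have h2 : pv - p = (pu - p).+1 by rewrite -pE subSn.
        exists (nth z (z :: P) (pv - p)).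
          by rewrite /f0 /chain /idx /= !eqxx h1 h2 hlt.
        by rewrite h2; apply: pathi.
      * case: (leqP p pv) => hpv.
        -- have h2 : pu - p = (pv - p).+1 by rewrite -pE subSn.
           exists (nth z (z :: P) (pv - p)).
             have h3 : pv - p < size P by rewrite -h2.
             by rewrite /f0 /chain /idx /= !eqxx hpv (ltnW h3).
           by rewrite e_sym h2; apply: pathi; rewrite -h2.
        -- have Ep : (pu : nat) = p.
             by apply/eqP; rewrite eqn_leq hpu andbT -pE.
           exists w.
             by rewrite /f0 /chain /cw /= !eqxx /= leqNgt hpv /= pE Ep eqxx.
           by rewrite Ep subnn.
    + have Ep : (p : nat) = 0 by apply/eqP; rewrite -leqn0 -(eqP hS).
      exists w.
        by rewrite /f0 /chain /cw /= !eqxx /= Ep.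
      by have -> : (pu : nat) - p = 0 by rewrite (eqP hS).
exists phi; split; first by [].
have -> : phi (c, Some (j, p)) = z.
  by apply: phi_f0; rewrite /f0 /chain /idx /= !eqxx leqnn subnn.
have -> : phi o = x.
  apply: phi_f0; rewrite /f0.
  have -> : chain o = false.
    case Eo: o => [co [[jo po]|]] //; rewrite Eo in ou nlw.
    rewrite /chain /=; apply/negP => /and4P [/eqP Ec /eqP Ej hp _].
    subst co jo; rewrite leq_eqVlt in hp; case/orP: hp => [/eqP Ep | hl].
      have Epo : po = p by apply: ord_inj; rewrite Ep.
      by move: ou; rewrite Epo eqxx.
    by move: nlw; rewrite /= !eqxx hl.
  have -> : cw o = false.
    case Eo: o => [co [[jo po]|]]; rewrite Eo /cw /tS_adj /= in nadj *;
      apply/negP => /andP [/eqP Ec h]; move: nadj; rewrite Ec eqxx /=.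
    - by move: h => /andP [/eqP -> ->]; rewrite eqxx orbT.
    - by rewrite h.
  by rewrite eqxx.
exact: nzx.
Qed.
End CaseB.

Lemma emb_trivial (a0 : T) : exists phi, good_emb phi.
Proof.
have [phi [h1 h2 _]] := @extend _ _ adj e K (fun _ => None) a0 tS_sym tS_irr e_sym Kcl HK
  (fun _ _ _ h => match h with end) (fun _ _ _ _ h => match h with end).
by exists phi.
Qed.

Lemma emb_pair (y3 x3 : T) (L : 'I_3 -> seq T) (z w x : T) (P : seq T) :
  y3 \notin K -> x3 \in K -> ~~ e y3 x3 ->
  (forall j, path e y3 (L j)) -> (forall j, L j != [::]) ->
  (forall j, last y3 (L j) \in K) -> (forall j, uniq (L j)) ->
  (forall j, y3 \notin L j) -> (forall j, x3 \notin L j) ->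
  (forall j j' v, v \in L j -> v \in L j' -> j = j') ->
  uniq [:: z, w, x & P] -> e z w -> path e z P ->
  P != [::] -> last z P \in K -> w \in K -> x \in K -> ~~ e z x ->
  forall a b : H, a != b -> ~~ adj a b ->
  exists phi, good_emb phi /\ ~~ e (phi a) (phi b).
Proof.
move=> h1 h2 h3 h4 h5 h6 h7 h8 h9 h10 g1 g2 g3 g4 g5 g6 g7 g8.
have cB := caseB g1 g2 g3 g5 g6 g7 g8.
have cC := caseC h1 h2 h3 h4 h5 h6 h7 h8 h9 h10.
move=> [ca oa] [cb ob] ab nadj.
have nadj' : ~~ adj (cb, ob) (ca, oa) by rewrite tS_sym.
have ba : (cb, ob) != (ca, oa) by rewrite eq_sym.
have swap : (exists phi, good_emb phi /\ ~~ e (phi (cb, ob)) (phi (ca, oa))) ->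
    exists phi, good_emb phi /\ ~~ e (phi (ca, oa)) (phi (cb, ob)).
  by move=> [phi [g hh]]; exists phi; rewrite e_sym.
case: oa ab nadj nadj' ba swap => [[ja pa]|] ab nadj nadj' ba swap.
- case lw: ((cb == ca) && (if ob is Some (j', p') then (j' == ja) && (pa < p') else false)).
  + move: lw; case: ob ab nadj nadj' ba swap => [[jb pb]|] ab nadj nadj' ba swap; last by rewrite andbF.
    move=> /andP [/eqP Ec /andP [/eqP Ej hlt]].
    subst cb jb.
    apply: swap.
    apply: cB ab nadj' _.
    by rewrite /= eqxx /= eqxx /= ltnNge (ltnW hlt).
  + by apply: cB => //; rewrite lw.
- case: ob ab nadj nadj' ba swap => [[jb pb]|] ab nadj nadj' ba swap.
  + apply: swap.
    apply: cB ab nadj' _.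
    by rewrite /= andbF.
  + apply: cC => //=; apply: contra ab => /eqP ->; by [].
Qed.
End TS.

Section PathLemmas.
Variables (T : eqType) (r : rel T).

Lemma path_all (Q : pred T) x p :
  (forall a b, r a b -> Q b) -> path r x p -> all Q p.
Proof.
move=> hQ; elim: p x => [//|q p IH] x /= /andP [hxq hp].
by rewrite (hQ _ _ hxq) (IH _ hp).
Qed.

Lemma path_closed (Q : pred T) x p :
  (forall a b, Q a -> r a b -> Q b) -> Q x -> path r x p -> Q (last x p).
Proof.
move=> hQ; elim: p x => [//|q p IH] x /= hx /andP [hxq hp].
by apply: IH (hQ _ _ hx hxq) hp.
Qed.

Lemma first_hit (X : pred T) x p : path r x p -> X (last x p) ->
  exists p', [/\ path r x p', X (last x p'), {subset p' <= p},
    (forall v, v \in belast x p' -> ~~ X v) & (uniq (x :: p) -> uniq (x :: p'))].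
Proof.
elim: p x => [|q p IH] x /=.
  by move=> _ hx; exists [::]; split.
move=> /andP [hxq hp] hl.
case: (boolP (X x)) => hx.
  by exists [::]; split.
have [p' [h1 h2 h3 h4 h5]] := IH q hp hl.
exists (q :: p'); split => //=.
- by rewrite hxq.
- move=> v; rewrite inE => /orP [/eqP ->|hv]; first by rewrite inE eqxx.
  by rewrite inE (h3 _ hv) orbT.
- by move=> v; rewrite inE => /orP [/eqP ->|/h4].
- move=> /andP [hnx huq]; apply/andP; split; last exact: h5.
  apply: contra hnx; rewrite !inE => /orP [->//|/h3 ->]; by rewrite orbT.
Qed.

Hypothesis r_sym : symmetric r.

Lemma split_path x p y : path r x p -> y \in x :: p ->
  exists q1 q2, [/\ x :: p = q1 ++ y :: q2, path r y (rev q1),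
     last y (rev q1) = x, path r y q2 & last y q2 = last x p].
Proof.
elim: p x => [|z p IH] x /=.
  rewrite inE => _ /eqP ->; by exists [::], [::].
move=> /andP [hxz hp]; rewrite inE => /orP [/eqP Ey|hy].
  by subst y; exists [::], (z :: p); rewrite /= hxz hp.
have [q1 [q2 [E h1 h2 h3 h4]]] := IH z hp hy.
exists (x :: q1), q2; split => //.
- by rewrite E.
- by rewrite rev_cons rcons_path h1 h2 r_sym.
- by rewrite rev_cons last_rcons.
Qed.

Lemma rev_belast_path x p : path r x p ->
  path r (last x p) (rev (belast x p)) /\ last (last x p) (rev (belast x p)) = x.
Proof.
move=> hp; split.
  rewrite rev_path; apply: sub_path hp => a b; by rewrite r_sym.
case: p {hp} => [//|q p] /=; by rewrite rev_cons last_rcons.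
Qed.
End PathLemmas.

Section Graph.
Variables (T : finType) (e : rel T) (K : {set T}).
Hypotheses (e_sym : symmetric e) (e_irr : irreflexive e) (Kcl : is_clique e K)
  (Kmax : forall v, v \notin K -> exists2 k, k \in K & ~~ e v k)
  (Kbig : 6 <= #|K|)
  (hcut : forall U : {set T}, #|U| <= 2 -> ~ clique_cutset e U).

Lemma noCut (U : {set T}) : #|U| <= 2 -> is_clique e U ->
  forall x y, x \notin U -> y \notin U -> connect (del_rel e U) x y.
Proof.
move=> hU hcl x y hx hy; apply/negPn/negP => hn.
by apply: (hcut hU); split => //; exists x, y; split.
Qed.

Lemma pick1 (A : {set T}) : 0 < #|A| -> exists2 a, a \in A & #|A :\ a| = #|A|.-1.
Proof.
move=> /card_gt0P [a ha]; exists a => //.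
by rewrite (cardsD1 a A) ha.
Qed.

Lemma three (A : {set T}) : 2 < #|A| ->
  exists a b c, [/\ a \in A, b \in A, c \in A & [/\ a != b, a != c & b != c]].
Proof.
move=> h.
have [a ha ca] := pick1 (ltnW (ltnW h)).
have [b hb cb] : exists2 b, b \in A :\ a & #|A :\ a :\ b| = #|A :\ a|.-1.
  by apply: pick1; rewrite ca; case: #|A| h => [|[|[|n]]].
have [c hc _] : exists2 c, c \in A :\ a :\ b & #|A :\ a :\ b :\ c| = #|A :\ a :\ b|.-1.
  by apply: pick1; rewrite cb ca; case: #|A| h => [|[|[|n]]].
move: hb hc; rewrite !inE => /andP [ba bA] /and3P [cb' ca' cA].
by exists a, b, c; split => //; split; rewrite 1?eq_sym // .
Qed.

Lemma cross z0 p : z0 \notin K -> path e z0 p -> last z0 p \in K ->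
  exists z w, [/\ z \notin K, w \in K & e z w].
Proof.
elim: p z0 => [|q p IH] z0 /=; first by move=> h _ h'; rewrite h' in h.
move=> hz /andP [hzq hp] hl.
case: (boolP (q \in K)) => hq; first by exists z0, q.
exact: IH hq hp hl.
Qed.

Lemma del_sub U : subrel (del_rel e U) e.
Proof. by move=> a b /and3P []. Qed.

Lemma del_sym U : symmetric (del_rel e U).
Proof. by move=> a b; rewrite /del_rel e_sym (andbC (a \notin U)). Qed.

Lemma spider2 (z0 : T) : z0 \notin K -> exists z w x (P : seq T),
  [/\ uniq [:: z, w, x & P], e z w, path e z P, P != [::] &
      [/\ last z P \in K, w \in K, x \in K & ~~ e z x]].
Proof.
move=> hz0.
have [k0 hk0] : exists k0, k0 \in K.
  by apply/card_gt0P; apply: leq_trans Kbig.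
have hconn : connect e z0 k0.
  have : connect (del_rel e set0) z0 k0.
    by apply: noCut; rewrite ?cards0 ?inE // => a b; rewrite inE.
  by apply: connect_sub => a b /del_sub hab; apply: connect1.
move/connectP: hconn => [p hp hk].
have hl : last z0 p \in K by rewrite -hk.
have [z [w [hz hw hzw]]] := cross hz0 hp hl.
have zK v : v \in K -> z != v by move=> hv; apply: contraNneq hz => ->.
case: (boolP [exists w', (w' \in K) && (w' != w) && e z w']).
  move=> /existsP [w' /andP [/andP [hw' nww'] hzw']].
  have [x hx nzx] := Kmax hz.
  exists z, w, x, [:: w']; split => //=.
  - rewrite !inE !negb_or (zK _ hw) (zK _ hx) (zK _ hw') /= andbT (eq_sym w w') nww' andbT.
    apply/andP; split.
      by apply: contraNneq nzx => <-.
    by apply: contraNneq nzx => ->.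
  - by rewrite hzw'.
move=> hno.
have onlyw v : v \in K -> v != w -> ~~ e z v.
  move=> hv hvw; apply/negP => hzv; move/negP: hno; apply.
  by apply/existsP; exists v; rewrite hv hvw hzv.
have [x hx xw] : exists2 x, x \in K & x != w.
  have := Kbig; rewrite (cardsD1 w K) hw => h.
  have /card_gt0P [x] : 0 < #|K :\ w| by move: h; case: #|K :\ w|.
  by rewrite !inE => /andP [? ?]; exists x.
have [k hk1 kwx] : exists2 k, k \in K & k \notin [set w; x].
  have h3 : #|[set w; x]| < #|K|.
    by rewrite cards2; apply: leq_trans Kbig; case: (w != x).
  have /card_gt0P [k] : 0 < #|K :\: [set w; x]|.
    rewrite cardsD; have : #|K :&: [set w; x]| <= #|[set w; x]|.
      by apply: subset_leq_card; apply: subsetIr.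
    move: h3; set m := #|K :&: _|; set m2 := #|[set w; x]|; lia.
  by rewrite in_setD => /andP [? ?]; exists k.
have Ucl : is_clique e [set w; x].
  by move=> a b ha hb; apply: Kcl; [move: ha|move: hb]; rewrite !inE => /orP [] /eqP ->.
have hU2 : #|[set w; x]| <= 2 by rewrite cards2; case: (w != x).
have hzU : z \notin [set w; x] by rewrite !inE !negb_or !zK.
have := noCut hU2 Ucl hzU kwx.
move/connectP => [p2 hp2]; move: hp2.
case/shortenP => P hP huq _ hl2.
have hPU : all (fun v => v \notin [set w; x]) P.
  by apply: path_all hP => a b /and3P [].
have hPK : last z P \in K by rewrite -hl2.
exists z, w, x, P; split => //.
- move: huq hPU; rewrite /= !inE !negb_or (zK _ hw) (zK _ hx) /= => /andP [-> ->].
  move/allP => hall; rewrite eq_sym xw /= andbT.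
  apply/andP; split; apply/negP => hin; have := hall _ hin; by rewrite !inE eqxx ?orbT.
- by move: (sub_path (@del_sub [set w; x])) => /(_ z P hP).
- by apply: contraTneq hPK => ->; apply: contraNN hz; rewrite /=.
- by split => //; apply: onlyw.
Qed.

Definition spider3 (y x : T) (L : 'I_3 -> seq T) :=
  [/\ y \notin K, x \in K, ~~ e y x, forall j, path e y (L j) & forall j, L j != [::]] /\
  [/\ forall j, last y (L j) \in K, forall j, uniq (L j), forall j, y \notin L j,
      forall j, x \notin L j & forall j j' v, v \in L j -> v \in L j' -> j = j'].

Lemma mk3 (y x : T) (l0 l1 l2 : seq T) :
  y \notin K -> x \in K -> ~~ e y x -> uniq (y :: x :: l0 ++ l1 ++ l2) ->
  path e y l0 -> path e y l1 -> path e y l2 ->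
  l0 != [::] -> l1 != [::] -> l2 != [::] ->
  last y l0 \in K -> last y l1 \in K -> last y l2 \in K ->
  exists L, spider3 y x L.
Proof.
move=> yK xK nyx huq p0 p1 p2 n0 n1 n2 k0 k1 k2.
exists (fun j : 'I_3 => nth [::] [:: l0; l1; l2] j).
move: huq; rewrite /= !inE !negb_or !mem_cat !negb_or.
move=> /and3P [/and4P [yx yl0 yl1 yl2] /and3P [xl0 xl1 xl2]].
rewrite !cat_uniq => /and3P [u0 hh /and3P [u1 hh2 u2]].
move: hh; rewrite has_cat negb_or => /andP [d01 d02].
split; first by split => //; case=> [[|[|[|j]]] hj] //=.
split; try by case=> [[|[|[|j]]] hj] //=.
move=> [[|[|[|j]]] hj] [[|[|[|j']]] hj'] v //= h1 h2;
  first [ by apply: val_inj | by case/hasP: d01; exists v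
        | by case/hasP: d02; exists v | by case/hasP: hh2; exists v ].
Qed.

Lemma uniq_part (Q : pred T) (s : seq T) :
  uniq (filter Q s) -> uniq (filter (predC Q) s) -> uniq s.
Proof.
elim: s => [//|a s IH] /=; case: (boolP (Q a)) => ha /=.
  move=> /andP [ha' u1] u2; rewrite IH // andbT.
  by apply: contra ha' => hin; rewrite mem_filter ha hin.
move=> u1 /andP [ha' u2]; rewrite IH // andbT.
by apply: contra ha' => hin; rewrite mem_filter /= ha hin.
Qed.

Lemma spider3_ex (z0 : T) : z0 \notin K -> exists y x L, spider3 y x L.
Proof.
move=> hz0.
pose r := del_rel e K.
pose C := [set v | connect r z0 v].
have rsym : symmetric r by apply: del_sym.
have csym := sym_connect_sym rsym.
have CnK v : v \in C -> v \notin K.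
  rewrite inE => /connectP [p hp ->].
  by apply: (path_closed (Q := fun v => v \notin K)) hp => // a b _ /and3P [].
pose A := [set k in K | [exists c in C, e c k]].
have hA : 2 < #|A|.
  rewrite ltnNge; apply/negP => hA2.
  have Acl : is_clique e A.
    by move=> a b; rewrite !inE => /andP [ha _] /andP [hb _]; apply: Kcl.
  have [kk hkk kkA] : exists2 kk, kk \in K & kk \notin A.
    have /card_gt0P [kk] : 0 < #|K :\: A|.
      rewrite cardsD; have : #|K :&: A| <= #|A| by apply: subset_leq_card; apply: subsetIr.
      move: hA2 Kbig; set m := #|K :&: A|; set m2 := #|A|; lia.
    by rewrite in_setD => /andP [? ?]; exists kk.
  have z0A : z0 \notin A by rewrite inE (negbTE hz0).
  have := noCut hA2 Acl z0A kkA.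
  move/connectP => [p hp hl].
  have : kk \in C.
    rewrite hl; apply: (path_closed (Q := fun v => v \in C)) hp; last first.
      by rewrite inE connect0.
    move=> a b ha /and3P [hab _ hbA].
    have hbK : b \notin K.
      apply: contra hbA => hbK; rewrite inE hbK /=; by apply/existsP; exists a; rewrite ha.
    have haK := CnK a ha.
    move: ha; rewrite !inE => ha; apply: (connect_trans ha).
    by apply: connect1; rewrite /r /del_rel hab hbK haK.
  by move/CnK; rewrite hkk.
have [k1 [k2 [k3 [hk1 hk2 hk3 [d12 d13 d23]]]]] := three hA.
have getc k : k \in A -> exists2 c, c \in C & e c k.
  by rewrite inE => /andP [_ /existsP [c /andP [hc hck]]]; exists c.
have [c1 hc1 ec1] := getc _ hk1.
have [c2 hc2 ec2] := getc _ hk2.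
have [c3 hc3 ec3] := getc _ hk3.
have k1K : k1 \in K by move: hk1; rewrite inE => /andP [].
have k2K : k2 \in K by move: hk2; rewrite inE => /andP [].
have k3K : k3 \in K by move: hk3; rewrite inE => /andP [].
have cc a b : a \in C -> b \in C -> connect r a b.
  rewrite !inE => ha hb; apply: connect_trans hb; by rewrite csym.
have rnK a b : r a b -> b \notin K by case/and3P.
move: (cc _ _ hc1 hc2) => /connectP [p12' hp12' hl12].
move: hl12; case/shortenP: hp12' => p12 hp12 hu12 _ hl12.
move: (cc _ _ hc3 hc1) => /connectP [p3' hp3' hl3].
move: hl3; case/shortenP: hp3' => p3 hp3 hu3 _ hl3.
have hX : last c3 p3 \in c1 :: p12 by rewrite -hl3 inE eqxx.
have [p3h [hp3h hy hsub hbel hu3h]] := first_hit hp3 hX.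
set y := last c3 p3h in hy.
have [q1 [q2 [Eq hq1 lq1 hq2 lq2]]] := split_path rsym hp12 hy.
have [hb3 lb3] := rev_belast_path rsym hp3h.
rewrite -/y in hb3 lb3.
set b3 := belast c3 p3h in hb3 lb3.
have all12 : all (fun v => v \notin K) (c1 :: p12).
  by rewrite /= (CnK _ hc1) /=; apply: path_all hp12.
have allq : all (fun v => v \notin K) (q1 ++ y :: q2) by rewrite -Eq.
have yK : y \notin K by apply: (allP all12).
have allb3 : all (fun v => v \notin K) b3.
  apply/allP => v /mem_belast; rewrite inE => /orP [/eqP ->|hv]; first exact: CnK.
  by have /allP := path_all rnK hp3h; apply.
have uq : uniq (q1 ++ y :: q2) by rewrite -Eq.
have rsub := @del_sub K.
have fnone (w : seq T) : all (fun v => v \notin K) w -> [seq v <- w | v \in K] = [::].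
  by elim: w => //= a w IH /andP [ha hw]; rewrite (negbTE ha) IH.
have fall (w : seq T) : all (fun v => v \notin K) w -> filter (predC (fun v => v \in K)) w = w.
  by move=> h; apply/all_filterP.
move: allq; rewrite all_cat /= => /and3P [allq1 _ allq2].
have allq1r : all (fun v => v \notin K) (rev q1) by rewrite all_rev.
have allb3r : all (fun v => v \notin K) (rev b3) by rewrite all_rev.
have nil_rcons (w : seq T) k : rcons w k != [::] by rewrite -size_eq0 size_rcons.
case: (boolP [exists x, [&& x \in K, ~~ e y x & x \notin [:: k1; k2; k3]]]).
  move=> /existsP [x /and3P [xK nyx xk]].
  suff [L hL] : exists L, spider3 y x L by exists y, x, L.
  apply: (@mk3 y x (rcons (rev q1) k1) (rcons q2 k2) (rcons (rev b3) k3))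
    => //; rewrite ?last_rcons ?nil_rcons //.
  - apply: (@uniq_part (fun v => v \in K)).
    + rewrite /= xK (negbTE yK) !filter_cat !filter_rcons k1K k2K k3K.
      rewrite !fnone //= !inE !negb_or d12 d13 d23 !andbT.
      by move: xk; rewrite !inE !negb_or.
    + rewrite /= yK xK /= !filter_cat !filter_rcons inE k1K inE k2K inE k3K /= !fall //.
      suff : uniq (y :: rev q1 ++ q2 ++ rev b3) by [].
      have pp : perm_eq (y :: rev q1 ++ q2) (q1 ++ y :: q2).
        by rewrite -cat1s perm_catCA /= perm_cat2r perm_rev.
      rewrite catA -cat_cons cat_uniq (perm_uniq pp) uq /= rev_uniq.
      apply/andP; split.
        apply/hasPn => v; rewrite mem_rev => hv; rewrite (perm_mem pp) -Eq.
        exact: hbel.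
      have := hu3h hu3; rewrite lastI rcons_uniq => /andP [_ ->] //.
  - by rewrite rcons_path (sub_path rsub hq1) lq1.
  - by rewrite rcons_path (sub_path rsub hq2) lq2 -hl12.
  - by rewrite rcons_path (sub_path rsub hb3) lb3.
move=> hno.
have adjy v : v \in K -> v \notin [:: k1; k2; k3] -> e y v.
  move=> hv hk; apply/negPn/negP => hn; move/negP: hno; apply.
  by apply/existsP; exists v; rewrite hv hn hk.
pose B := [set v | v \in [:: k1; k2; k3]].
have cB : #|B| <= 3 by rewrite cardsE; apply: card_size.
have hM : 2 < #|K :\: B|.
  rewrite cardsD; have : #|K :&: B| <= #|B| by apply: subset_leq_card; apply: subsetIr.
  move=> h; have hm := leq_trans h cB.
  rewrite ltn_subRL; apply: leq_trans Kbig; by rewrite addn2.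
have [m1 [m2 [m3 [hm1 hm2 hm3 [d1 d2 d3]]]]] := three hM.
move: hm1 hm2 hm3; rewrite !in_setD.
move=> /andP [n1 m1K] /andP [n2 m2K] /andP [n3 m3K].
rewrite /B inE in n1; rewrite /B inE in n2; rewrite /B inE in n3.
have e1 := adjy _ m1K n1; have e2 := adjy _ m2K n2; have e3 := adjy _ m3K n3.
have [x xK nyx] := Kmax yK.
have ne v : e y v -> x != v by move=> h; apply: contraNneq nyx => ->.
have nyv v : v \in K -> y != v by move=> h; apply: contraNneq yK => ->.
suff [L hL] : exists L, spider3 y x L by exists y, x, L.
apply: (@mk3 y x [:: m1] [:: m2] [:: m3]) => //=; rewrite ?e1 ?e2 ?e3 //.
rewrite !inE !negb_or (nyv x xK) (nyv _ m1K) (nyv _ m2K) (nyv _ m3K).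
by rewrite (ne _ e1) (ne _ e2) (ne _ e3) d1 d2 d3.
Qed.
End Graph.

Lemma tS0_false (h : tS_vert 0) : False.
Proof. by case: h => [[m hm]]. Qed.

Lemma card_tS t : #|tS_vert t| = 3 * t ^ 2 + t.
Proof.
rewrite /tS_vert card_prod card_option card_prod !card_ord; lia.
Qed.

Section Main.
Variables (t : nat) (T : finType) (e : rel T).
Hypotheses (e_sym : symmetric e) (e_irr : irreflexive e).
Notation H := (tS_vert t.+1).
Notation adj := (@tS_adj t.+1).

Lemma family_si (x0 : T) (h0 : H) :
  (forall a b : H, exists phi, good_emb e phi /\ (a != b -> ~~ adj a b -> ~~ e (phi a) (phi b))) ->
  si_to e adj.
Proof.
move=> hex.
pose good (f : {ffun H -> T}) (a b : H) :=
  [&& injectiveb f, [forall u, forall v, adj u v ==> e (f u) (f v)] &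
      ((a != b) && ~~ adj a b ==> ~~ e (f a) (f b))].
have goodP a b : exists f, good f a b.
  have [phi [[pinj phom] psep]] := hex a b.
  exists [ffun u => phi u]; apply/and3P; split.
  - by apply/injectiveP => u v; rewrite !ffunE => /pinj.
  - by apply/forallP => u; apply/forallP => v; apply/implyP => huv; rewrite !ffunE phom.
  - by apply/implyP => /andP [h1 h2]; rewrite !ffunE psep.
pose Fam (p : H * H) : {ffun H -> T} :=
  odflt [ffun=> x0] [pick f | good f p.1 p.2].
have FamP p : good (Fam p) p.1 p.2.
  rewrite /Fam; case: pickP => [f hf //|hn].
  by have [f hf] := goodP p.1 p.2; move: (hn f); rewrite hf.
pose M := #|{: H * H}|.
pose phi (i : 'I_M.+2) : H -> T := Fam (nth (h0, h0) (enum {: H * H}) i).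
apply: (@witness H T adj e M phi e_irr).
- by move=> i; have /and3P [/injectiveP h _ _] := FamP (nth (h0, h0) (enum {: H * H}) i).
- move=> i a b hab; have /and3P [_ /forallP /(_ a) /forallP /(_ b) /implyP h _] :=
    FamP (nth (h0, h0) (enum {: H * H}) i).
  exact: h.
- move=> a b ab nab.
  have hi : index (a, b) (enum {: H * H}) < M.+2.
    apply: leq_trans (leqnSn _); apply: leq_trans (leqnSn _).
    by rewrite /M cardE index_mem mem_enum.
  exists (Ordinal hi); rewrite /phi /= nth_index ?mem_enum //.
  have /and3P [_ _ /implyP h] := FamP (a, b).
  by apply: h; rewrite /= ab nab.
Qed.
End Main.

Unset Implicit Arguments.
Theorem mainTheorem8 (t : nat) (T : finType) (e : rel T)
  (e_sym : symmetric e) (e_irr : irreflexive e) :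
  in_X t e ->
  (forall U : {set T}, #|U| <= 2 -> ~ clique_cutset e U) ->
  complete e \/ Kr_free e (3 * t ^ 2 + t + 2).
Proof.
move=> HX Hcut.
case: t HX => [|t] HX.
  exfalso; apply: HX.
  apply: (@witness (tS_vert 0) T (@tS_adj 0) e 0 (fun _ h => False_rect T (tS0_false h)) e_irr).
  - by move=> i a; case: (tS0_false a).
  - by move=> i a; case: (tS0_false a).
  - by move=> a; case: (tS0_false a).
case: (boolP [forall x, forall y, (x != y) ==> e x y]) => hc.
  left => x y hxy; move/forallP: hc => /(_ x) /forallP /(_ y).
  by rewrite hxy.
right => -[S [HS Scl]]; apply: HX.
pose cl (A : {set T}) := [forall x in A, forall y in A, (x != y) ==> e x y].
have clP A : reflect (is_clique e A) (cl A).
  apply: (iffP idP).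
    by move=> /forall_inP h x y hx hy hxy; move: (h x hx) => /forall_inP /(_ y hy) /implyP; apply.
  move=> h; apply/forall_inP => x hx; apply/forall_inP => y hy; apply/implyP; exact: h.
have clS : cl S by apply/clP.
have [K clK Kmx] : exists2 K, cl K & forall A, cl A -> #|A| <= #|K|.
  by case: (@arg_maxnP _ S cl (fun A : {set T} => #|A|) clS) => K hK hm; exists K.
have Kcl : is_clique e K by apply/clP.
have KS : #|S| <= #|K| by apply: Kmx.
have Kmax v : v \notin K -> exists2 k, k \in K & ~~ e v k.
  move=> hv; case: (boolP [exists k in K, ~~ e v k]).
    by move=> /exists_inP [k hk hvk]; exists k.
  move=> /exists_inP hn; exfalso.
  have cl' : cl (v |: K).
    apply/clP => a b; rewrite !inE => /orP [/eqP ->|ha] /orP [/eqP ->|hb] hab.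
    - by rewrite eqxx in hab.
    - by apply/negPn/negP => hn'; apply: hn; exists b.
    - by rewrite e_sym; apply/negPn/negP => hn'; apply: hn; exists a.
    - exact: Kcl.
  by have := Kmx _ cl'; rewrite cardsU1 hv /= ltnn.
have [z0 hz0] : exists z0, z0 \notin K.
  case: (boolP [exists v, v \notin K]) => [/existsP [v hv]|hn]; first by exists v.
  exfalso; move/negP: hc; apply; apply/forallP => x; apply/forallP => y; apply/implyP => hxy.
  apply: Kcl => //.
  - by apply/negPn/negP => hx; move/negP: hn; apply; apply/existsP; exists x.
  - by apply/negPn/negP => hy; move/negP: hn; apply; apply/existsP; exists y.
have hr : 3 * t.+1 ^ 2 + t.+1 + 2 = #|tS_vert t.+1| + 2 by rewrite card_tS.
have HK : #|tS_vert t.+1| <= #|K| by move: KS; rewrite HS hr; lia.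
have Kbig : 6 <= #|K| by move: KS; rewrite HS; lia.
have [z [w [x [P [g1 g2 g3 g4 [g5 g6 g7 g8]]]]]] := spider2 Kcl Kmax Kbig Hcut hz0.
have [y3 [x3 [L [[h1 h2 h3 h4 h5] [h6 h7 h8 h9 h10]]]]] := spider3_ex e_sym Kcl Kmax Kbig Hcut hz0.
apply: (@family_si t T e e_irr x (ord0, None)).
move=> a b.
case: (boolP ((a != b) && ~~ tS_adj a b)) => [/andP [ab nab]|hn].
  have [phi [hg hs]] := emb_pair e_sym Kcl HK h1 h2 h3 h4 h5 h6 h7 h8 h9 h10 g1 g2 g3 g4 g5 g6 g7 g8 ab nab.
  by exists phi; split.
have [phi hg] := emb_trivial e_sym Kcl HK x.
exists phi; split => // ab nab; by rewrite ab nab in hn.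
Qed.
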